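(* For every $\beta=(\beta_1,\dots,\beta_k)\in\mathbb P^k$ with $k\ge 1$, and for $t\ge0$ and $\mathrm{Re}(z)<0$, $$\phi\tbinom{0^k}{\beta}=\sum_{n=0}^\infty\Bigg(\sum_{(s_1,\dots,s_k)\in \mathrm{WC}_k(n)}\Big(\sum_{i=0}^{s_1}\frac{b_{s_1-i}}{i!(s_1-i)!}t^i\Big)\frac{b_{s_2}\cdots b_{s_k}}{s_2!\cdots s_k!}(\beta_1+\cdots+\beta_k)^{s_1-1}(\beta_2+\cdots+\beta_k)^{s_2-1}\cdots\beta_k^{s_k-1}\Bigg)z^{n-k}.$$
   Context: $\mathbb P$ denotes the positive integers. For $\beta\in\mathbb P^k$, real $t\ge0$ and complex $z$ with $\mathrm{Re}(z)<0$, define $$\phi\tbinom{0^k}{\beta}=\sum_{0<i_1<\cdots<i_k}e^{(i_1+t)\beta_1z}\cdots e^{(i_k+t)\beta_kz}.$$ This series is absolutely convergent and is identified with its Laurent expansion in $z$. $\mathrm{WC}_k(n)$ denotes the set of sequences $(s_1,\dots,s_k)$ of nonnegative integers with $s_1+\dots+s_k=n$. The numbers $b_s$ are defined by $b_0=-1$, $b_1=-\tfrac12$ and $b_s=-B_s$ for $s\ge2$. Here $B_s$ are the Bernoulli numbers given by $z/(e^z-1)=\sum_{s\ge0}B_sz^s/s!$. Equivalently, $e^z/(1-e^z)=\sum_{s\ge0}\frac{b_s}{s!}z^{s-1}$. *)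

(* Defs.v *)
From Stdlib Require Import Reals ZArith List.
From Coquelicot Require Import Coquelicot.
Open Scope R_scope.

Definition cexp (z : C) : C := (exp (Re z) * cos (Im z), exp (Re z) * sin (Im z)).

(* Bernoulli numbers with B_1 = -1/2 (z/(e^z-1) = sum B_s z^s/s!), via the
   coefficient recurrence  sum_{i=0}^{n} C(n+1,i) B_i = 0 (n >= 1), B_0 = 1.
   bern_upto m j = B_j for j <= m. *)
Fixpoint bern_upto (m : nat) : nat -> R :=
  match m with
  | O => fun _ => 1
  | S m' =>
      let f := bern_upto m' in
      fun j => if (j <=? m')%nat then f j
               else - / INR (m' + 2) *
                    sum_f_R0 (fun i => Binomial.C (m' + 2) i * f i) m'
  end.

Definition bernoulli (n : nat) : R := bern_upto n n.

Definition bnum (s : nat) : R :=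
  match s with
  | O => -1
  | S O => - / 2
  | _ => - bernoulli s
  end.

(* Sum of F over WC_k(n): all lists (s_1,...,s_k) of naturals with sum n. *)
Fixpoint sum_WC (k n : nat) (F : list nat -> R) : R :=
  match k with
  | O => if (n =? 0)%nat then F nil else 0
  | S k' => sum_f_R0 (fun s => sum_WC k' (n - s) (fun l => F (s :: l))) n
  end.

Definition first_factor (s1 : nat) (t : R) : R :=
  sum_f_R0 (fun i => bnum (s1 - i) / (INR (fact i) * INR (fact (s1 - i))) * t ^ i) s1.

Fixpoint tail_factor (s : list nat) : R :=
  match s with
  | nil => 1
  | x :: s' => bnum x / INR (fact x) * tail_factor s'
  end.

Fixpoint pow_factor (s beta : list nat) : R :=
  match s, beta with
  | s1 :: s', b1 :: b' =>
      powerRZ (INR (list_sum (b1 :: b'))) (Z.of_nat s1 - 1) * pow_factor s' b'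
  | _, _ => 1
  end.

Definition term (beta : list nat) (t : R) (s : list nat) : R :=
  match s with
  | nil => 0
  | s1 :: s' => first_factor s1 t * tail_factor s' * pow_factor s beta
  end.

(* The coefficient of z^{n-k} on the right-hand side. *)
Definition coef (beta : list nat) (t : R) (n : nat) : R :=
  sum_WC (length beta) n (term beta t).

(* Sum over lo < i_1 < ... < i_k <= N of prod_j e^{(i_j+t) beta_j z}. *)
Fixpoint phi_box (beta : list nat) (t : R) (z : C) (lo N : nat) : C :=
  match beta with
  | nil => RtoC 1
  | b1 :: b' =>
      sum_n_m (fun i => Cmult (cexp (Cmult (RtoC ((INR i + t) * INR b1)) z))
                              (phi_box b' t z i N)) (S lo) N
  end.

(* Partial sums of phi(0^k; beta) over 0 < i_1 < ... < i_k <= N. *)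
Definition phi_partial (beta : list nat) (t : R) (z : C) (N : nat) : C :=
  phi_box beta t z 0 N.

(* Main.v *)
Require Import Defs.
From Stdlib Require Import Reals ZArith List Lia Lra.
From Coquelicot Require Import Coquelicot.
Open Scope R_scope.

Lemma sum_n_C_re (u : nat -> C) n :
  Re (sum_n u n) = sum_f_R0 (fun k => Re (u k)) n.
Proof.
  induction n.
  - rewrite sum_O. reflexivity.
  - rewrite sum_Sn. simpl. rewrite <- IHn. reflexivity.
Qed.

Lemma sum_n_C_im (u : nat -> C) n :
  Im (sum_n u n) = sum_f_R0 (fun k => Im (u k)) n.
Proof.
  induction n.
  - rewrite sum_O. reflexivity.
  - rewrite sum_Sn. simpl. rewrite <- IHn. reflexivity.
Qed.

Lemma flC (f : nat -> C) (l : C) :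
  filterlim f eventually (locally l) <->
  forall eps : posreal, eventually (fun n => ball l eps (f n)).
Proof. exact (@filterlim_locally _ _ eventually _ _ _). Qed.

Lemma flR (f : nat -> R) (l : R) :
  filterlim f eventually (locally l) <->
  forall eps : posreal, eventually (fun n => ball l eps (f n)).
Proof. exact (@filterlim_locally _ _ eventually _ _ _). Qed.

Lemma C_split (u : nat -> C) (l : C) :
  is_series u l <->
  is_series (fun n => Re (u n)) (Re l) /\ is_series (fun n => Im (u n)) (Im l).
Proof.
  unfold is_series. split.
  - intros H. pose proof (proj1 (flC _ _) H) as H'. clear H. rename H' into H. split; apply (proj2 (flR _ _));
    intros eps; specialize (H eps);
    eapply filter_imp; try apply H; intros n [H1 H2];
    [rewrite sum_n_Reals, <- sum_n_C_re | rewrite sum_n_Reals, <- sum_n_C_im]; auto.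
  - intros [H1 H2]. pose proof (proj1 (flR _ _) H1) as H1'. pose proof (proj1 (flR _ _) H2) as H2'.
    clear H1 H2. rename H1' into H1. rename H2' into H2.
    apply (proj2 (flC _ _)). intros eps.
    specialize (H1 eps); specialize (H2 eps).
    generalize (filter_and _ _ H1 H2). apply filter_imp.
    intros n [A B]. rewrite sum_n_Reals, <- sum_n_C_re in A.
    rewrite sum_n_Reals, <- sum_n_C_im in B. split; auto.
Qed.

Fixpoint csum (f : nat -> C) (n : nat) : C :=
  match n with
  | O => f O
  | S m => Cplus (csum f m) (f (S m))
  end.

Lemma csum_re f n : Re (csum f n) = sum_f_R0 (fun k => Re (f k)) n.
Proof. induction n; simpl; auto. rewrite <- IHn; reflexivity. Qed.
Lemma csum_im f n : Im (csum f n) = sum_f_R0 (fun k => Im (f k)) n.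
Proof. induction n; simpl; auto. rewrite <- IHn; reflexivity. Qed.
Lemma sum_n_csum (f : nat -> C) n : sum_n f n = csum f n.
Proof. induction n. rewrite sum_O; reflexivity. rewrite sum_Sn, IHn; reflexivity. Qed.
Lemma csum_Cmod f n : Cmod (csum f n) <= sum_f_R0 (fun k => Cmod (f k)) n.
Proof.
  induction n; simpl. lra.
  eapply Rle_trans. apply Cmod_triangle. lra.
Qed.
Lemma csum_ext f g n : (forall k, (k <= n)%nat -> f k = g k) -> csum f n = csum g n.
Proof.
  induction n; intros H; simpl. apply H; lia.
  rewrite IHn by (intros; apply H; lia). rewrite H by lia. reflexivity.
Qed.
Lemma csum_RtoC (f : nat -> R) n : csum (fun k => RtoC (f k)) n = RtoC (sum_f_R0 f n).
Proof. induction n; simpl; auto. rewrite IHn, RtoC_plus. reflexivity. Qed.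
Lemma csum_mult_r f c n : Cmult (csum f n) c = csum (fun k => Cmult (f k) c) n.
Proof. induction n; simpl; auto. rewrite <- IHn. ring. Qed.

Lemma im_le_Cmod c : Rabs (Im c) <= Cmod c.
Proof. destruct c as [x y]. unfold Cmod; simpl. rewrite <- sqrt_Rsqr_abs. apply sqrt_le_1_alt. unfold Rsqr. nra. Qed.

Lemma ex_series_Re (u : nat -> C) :
  ex_series (fun n => Cmod (u n)) -> ex_series (fun n => Rabs (Re (u n))).
Proof.
  intros H. apply (@ex_series_le _ R_CompleteNormedModule _ (fun n => Cmod (u n))); auto.
  intros n. change (norm (Rabs (Re (u n)))) with (Rabs (Rabs (Re (u n)))).
  rewrite Rabs_Rabsolu. apply re_le_Cmod.
Qed.
Lemma ex_series_Im (u : nat -> C) :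
  ex_series (fun n => Cmod (u n)) -> ex_series (fun n => Rabs (Im (u n))).
Proof.
  intros H. apply (@ex_series_le _ R_CompleteNormedModule _ (fun n => Cmod (u n))); auto.
  intros n. change (norm (Rabs (Im (u n)))) with (Rabs (Rabs (Im (u n)))).
  rewrite Rabs_Rabsolu. apply im_le_Cmod.
Qed.

Lemma is_series_Rminus (a b : nat -> R) la lb :
  is_series a la -> is_series b lb -> is_series (fun n => a n - b n) (la - lb).
Proof. intros. apply (is_series_minus a b la lb); auto. Qed.
Lemma is_series_Rplus (a b : nat -> R) la lb :
  is_series a la -> is_series b lb -> is_series (fun n => a n + b n) (la + lb).
Proof. intros. apply (is_series_plus a b la lb); auto. Qed.

Lemma C_cauchy (u v : nat -> C) lu lv :
  is_series u lu -> is_series v lv ->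
  ex_series (fun n => Cmod (u n)) -> ex_series (fun n => Cmod (v n)) ->
  is_series (fun n => csum (fun k => Cmult (u k) (v (n - k)%nat)) n) (Cmult lu lv).
Proof.
  intros Hu Hv Au Av.
  apply C_split in Hu as [Hur Hui]. apply C_split in Hv as [Hvr Hvi].
  pose proof (ex_series_Re _ Au). pose proof (ex_series_Im _ Au).
  pose proof (ex_series_Re _ Av). pose proof (ex_series_Im _ Av).
  apply C_split; split.
  - eapply is_series_ext.
    2: apply (is_series_Rminus _ _ _ _ (is_series_mult _ _ _ _ Hur Hvr H H1)
                                   (is_series_mult _ _ _ _ Hui Hvi H0 H2)).
    intros n. simpl. rewrite csum_re. rewrite <- minus_sum. apply sum_eq. intros. destruct (u i), (v (n - i)%nat); simpl; ring.
  - eapply is_series_ext.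
    2: apply (is_series_Rplus _ _ _ _ (is_series_mult _ _ _ _ Hur Hvi H H2)
                                   (is_series_mult _ _ _ _ Hui Hvr H0 H1)).
    intros n. simpl. rewrite csum_im, <- plus_sum. apply sum_eq. intros. destruct (u i), (v (n - i)%nat); simpl; ring.
Qed.

Lemma C_cauchy_abs (u v : nat -> C) :
  ex_series (fun n => Cmod (u n)) -> ex_series (fun n => Cmod (v n)) ->
  ex_series (fun n => Cmod (csum (fun k => Cmult (u k) (v (n - k)%nat)) n)).
Proof.
  intros [lu Hu] [lv Hv].
  apply (@ex_series_le _ R_CompleteNormedModule _ (fun n => sum_f_R0 (fun k => Cmod (u k) * Cmod (v (n-k)%nat)) n)).
  - intros n. change (norm (Cmod (csum (fun k => Cmult (u k) (v (n - k)%nat)) n)))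
      with (Rabs (Cmod (csum (fun k => Cmult (u k) (v (n - k)%nat)) n))).
    rewrite Rabs_pos_eq by apply Cmod_ge_0.
    eapply Rle_trans. apply csum_Cmod. apply Req_le. apply sum_eq. intros. apply Cmod_mult.
  - exists (lu * lv). apply (is_series_mult (fun n => Cmod (u n)) (fun n => Cmod (v n)) lu lv); auto.
    + exists lu. eapply is_series_ext; [|exact Hu]. intros; rewrite Rabs_pos_eq; auto; apply Cmod_ge_0.
    + exists lv. eapply is_series_ext; [|exact Hv]. intros; rewrite Rabs_pos_eq; auto; apply Cmod_ge_0.
Qed.

Lemma C_unique (u : nat -> C) l1 l2 : is_series u l1 -> is_series u l2 -> l1 = l2.
Proof.
  intros H1 H2. apply C_split in H1 as [A1 B1]. apply C_split in H2 as [A2 B2].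
  apply is_series_unique in A1, A2, B1, B2.
  destruct l1, l2; simpl in *. congruence.
Qed.

Lemma C_abs_ex (u : nat -> C) : ex_series (fun n => Cmod (u n)) -> exists l, is_series u l.
Proof.
  intros H. destruct (ex_series_Rabs _ (ex_series_Re _ H)) as [lr Hr].
  destruct (ex_series_Rabs _ (ex_series_Im _ H)) as [li Hi].
  exists (lr, li). apply C_split. split; auto.
Qed.

Lemma Cpow_add (z : C) m p : Cpow z (m + p) = Cmult (Cpow z m) (Cpow z p).
Proof. induction m; simpl. ring. rewrite IHm. ring. Qed.

Lemma Cpow_RtoC_mult (c : R) (z : C) n : Cpow (Cmult (RtoC c) z) n = Cmult (RtoC (c ^ n)) (Cpow z n).
Proof. induction n; simpl. ring. rewrite IHn, RtoC_mult. ring. Qed.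

Definition PSc (a : nat -> R) (z : C) (l : C) :=
  is_series (fun n => Cmult (RtoC (a n)) (Cpow z n)) l /\
  ex_series (fun n => Cmod (Cmult (RtoC (a n)) (Cpow z n))).

Lemma ex_series_ext_R (a b : nat -> R) : (forall n, a n = b n) -> ex_series a -> ex_series b.
Proof. intros H [l Hl]. exists l. eapply is_series_ext; eauto. Qed.

Lemma PSc_ext a b z l : (forall n, a n = b n) -> PSc a z l -> PSc b z l.
Proof.
  intros H [H1 H2]. split.
  - eapply is_series_ext; [|exact H1]. intros; simpl; rewrite H; auto.
  - eapply ex_series_ext_R; [|exact H2]. intros; simpl; rewrite H; auto.
Qed.

Lemma PSc_unique a z l1 l2 : PSc a z l1 -> PSc a z l2 -> l1 = l2.
Proof. intros [H1 _] [H2 _]. eapply C_unique; eauto. Qed.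

Lemma PSc_mult a b z la lb : PSc a z la -> PSc b z lb ->
  PSc (fun n => sum_f_R0 (fun k => a k * b (n - k)%nat) n) z (Cmult la lb).
Proof.
  intros [Ha Aa] [Hb Ab].
  assert (E : forall n, csum (fun k => Cmult (Cmult (RtoC (a k)) (Cpow z k))
                       (Cmult (RtoC (b (n - k)%nat)) (Cpow z (n - k)%nat))) n
     = Cmult (RtoC (sum_f_R0 (fun k => a k * b (n - k)%nat) n)) (Cpow z n)).
  { intros n. rewrite <- csum_RtoC, csum_mult_r. apply csum_ext. intros k Hk.
    assert (Hp : Cmult (Cpow z k) (Cpow z (n - k)) = Cpow z n) by (rewrite <- Cpow_add; f_equal; lia).
    rewrite RtoC_mult, <- Hp. ring. }
  split.
  - eapply is_series_ext; [|apply (C_cauchy _ _ _ _ Ha Hb Aa Ab)]. exact E.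
  - eapply ex_series_ext_R; [|apply (C_cauchy_abs _ _ Aa Ab)]. intros n. simpl. rewrite E. reflexivity.
Qed.

Lemma PSc_scal c a z l : PSc a z l -> PSc (fun n => c * a n) z (Cmult (RtoC c) l).
Proof.
  intros [H A]. split.
  - apply C_split in H as [Hr Hi]. apply C_split. split.
    + rewrite re_scal_l.
      eapply is_series_ext; [|exact (is_series_scal c _ _ Hr)].
      intros n. cbv beta. rewrite RtoC_mult, <- Cmult_assoc, !re_scal_l. reflexivity.
    + rewrite im_scal_l.
      eapply is_series_ext; [|exact (is_series_scal c _ _ Hi)].
      intros n. cbv beta. rewrite RtoC_mult, <- Cmult_assoc, !im_scal_l. reflexivity.
  - destruct A as [la Hla]. exists (Rabs c * la).
    eapply is_series_ext; [|exact (is_series_scal (Rabs c) _ _ Hla)].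
    intros n. cbv beta. rewrite RtoC_mult, <- Cmult_assoc, !Cmod_mult, !Cmod_R. reflexivity.
Qed.

Ltac toC := match goal with |- ?a = ?b => change (@eq C a b) end.

Lemma PSc_plus a b z la lb : PSc a z la -> PSc b z lb -> PSc (fun n => a n + b n) z (Cplus la lb).
Proof.
  intros [Ha Aa] [Hb Ab]. split.
  - eapply is_series_ext; [|exact (is_series_plus _ _ _ _ Ha Hb)].
    intros n. cbv beta. rewrite RtoC_plus. change (plus ?x ?y) with (Cplus x y). toC. ring.
  - apply (@ex_series_le _ R_CompleteNormedModule _
      (fun n => Cmod (Cmult (RtoC (a n)) (Cpow z n)) + Cmod (Cmult (RtoC (b n)) (Cpow z n)))).
    + intros n. change (norm ?x) with (Rabs x). rewrite Rabs_pos_eq by apply Cmod_ge_0.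
      rewrite RtoC_plus, Cmult_plus_distr_r. apply Cmod_triangle.
    + exact (ex_series_plus _ _ Aa Ab).
Qed.

Lemma PSc_minus a b z la lb : PSc a z la -> PSc b z lb -> PSc (fun n => a n - b n) z (Cminus la lb).
Proof.
  intros Ha Hb. apply (PSc_scal (-1)) in Hb.
  replace (Cminus la lb) with (Cplus la (Cmult (RtoC (-1)) lb))
    by (destruct la, lb; unfold Cminus, Cplus, Cmult, Copp; simpl; f_equal; ring).
  eapply PSc_ext; [|apply (PSc_plus _ _ _ _ _ Ha Hb)].
  intros; simpl; ring. 
Qed.

Lemma is_series_const_sum (u : nat -> C) l : (forall n, csum u n = l) -> is_series u l.
Proof.
  intros H. unfold is_series. eapply filterlim_ext; [|apply filterlim_const].
  intros n. rewrite sum_n_csum. auto.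
Qed.

Lemma PSc_delta z : PSc (fun n => if (n =? 0)%nat then 1 else 0) z (RtoC 1).
Proof.
  assert (E : forall (f : nat -> C), f O = RtoC 1 -> (forall n, f (S n) = RtoC 0) -> forall n, csum f n = RtoC 1).
  { intros f H0 HS n. induction n; simpl; auto. rewrite IHn, HS. ring. }
  split.
  - apply is_series_const_sum. apply E; simpl; intros; ring.
  - exists 1. apply (is_series_ext (fun n => Re (RtoC (Cmod (Cmult (RtoC (if (n =? 0)%nat then 1 else 0)) (Cpow z n)))))).
    { intros; simpl; auto. }
    apply (C_split _ (RtoC 1)). apply is_series_const_sum. apply E.
    + simpl. rewrite Cmult_1_l, Cmod_1. reflexivity.
    + intros n. simpl. rewrite Cmult_0_l, Cmod_0. reflexivity.
Qed.

Lemma PSc_shift a z l : PSc a z l -> PSc (fun n => match n with O => 0 | S m => a m end) z (Cmult z l).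
Proof.
  intros [H A]. split.
  - apply is_series_decr_1.
    match goal with |- is_series _ ?v => replace v with (Cmult z l) end.
    2:{ simpl. change (plus ?x ?y) with (Cplus x y); change (opp ?x) with (Copp x); toC. ring. }
    eapply is_series_ext; [|exact (is_series_scal (K := C_AbsRing) z _ _ H)].
    intros n. cbv beta. change (scal ?x ?y) with (Cmult x y). toC. simpl. ring.
  - apply ex_series_incr_1. simpl.
    destruct A as [la Hla]. exists (Cmod z * la).
    eapply is_series_ext; [|exact (is_series_scal (Cmod z) _ _ Hla)].
    intros n. cbv beta. change (scal ?x ?y) with (x * y).
    simpl. rewrite !Cmod_mult. ring.
Qed.

Lemma PSc_dilate a c z l : PSc a (Cmult (RtoC c) z) l -> PSc (fun n => a n * c ^ n) z l.
Proof.
  intros [H A]. split.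
  - eapply is_series_ext; [|exact H]. intros n. cbv beta.
    rewrite Cpow_RtoC_mult, RtoC_mult. toC. ring.
  - eapply ex_series_ext_R; [|exact A]. intros n. cbv beta.
    rewrite Cpow_RtoC_mult, RtoC_mult, Cmult_assoc. reflexivity.
Qed.

Lemma PSc_bound a z M : (forall n, Rabs (a n) <= M) -> Cmod z < 1 -> exists l, PSc a z l.
Proof.
  intros HM Hz.
  assert (A : ex_series (fun n => Cmod (Cmult (RtoC (a n)) (Cpow z n)))).
  { apply (@ex_series_le _ R_CompleteNormedModule _ (fun n => M * Cmod z ^ n)).
    - intros n. change (norm ?x) with (Rabs x). rewrite Rabs_pos_eq by apply Cmod_ge_0.
      rewrite Cmod_mult, Cmod_R, Cmod_pow. apply Rmult_le_compat_r; auto.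
      apply pow_le, Cmod_ge_0.
    - apply (ex_series_scal (K:=R_AbsRing) M (fun n => Cmod z ^ n)). apply ex_series_geom.
      rewrite Rabs_pos_eq; auto; apply Cmod_ge_0. }
  destruct (C_abs_ex _ A) as [l Hl]. exists l. split; auto.
Qed.

Lemma csum_shift f n : csum f (S n) = Cplus (f O) (csum (fun k => f (S k)) n).
Proof. induction n; simpl in *. reflexivity. rewrite IHn. ring. Qed.
Lemma csum_plus f g n : csum (fun k => Cplus (f k) (g k)) n = Cplus (csum f n) (csum g n).
Proof. induction n; simpl; auto. rewrite IHn. ring. Qed.
Lemma csum_mult_l c f n : Cmult c (csum f n) = csum (fun k => Cmult c (f k)) n.
Proof. induction n; simpl; auto. rewrite <- IHn. ring. Qed.

Lemma binC_n_0 n : Binomial.C n 0 = 1.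
Proof. unfold Binomial.C. rewrite Nat.sub_0_r. simpl. field. apply INR_fact_neq_0. Qed.
Lemma binC_n_n n : Binomial.C n n = 1.
Proof. unfold Binomial.C. rewrite Nat.sub_diag. simpl. field. apply INR_fact_neq_0. Qed.

Lemma C_binomial (a b : C) n :
  Cpow (Cplus a b) n = csum (fun k => Cmult (Cmult (RtoC (Binomial.C n k)) (Cpow a k)) (Cpow b (n - k))) n.
Proof.
  induction n.
  - simpl. rewrite binC_n_0. ring.
  - set (T := fun m k => Cmult (Cmult (RtoC (Binomial.C m k)) (Cpow a k)) (Cpow b (m - k))).
    change (Cpow (Cplus a b) (S n) = csum (T (S n)) (S n)).
    change (Cpow (Cplus a b) n = csum (T n) n) in IHn.
    simpl Cpow. rewrite IHn. rewrite csum_shift.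
    assert (H0 : T (S n) O = Cmult b (T n O)).
    { unfold T. rewrite !binC_n_0, !Nat.sub_0_r. simpl. ring. }
    destruct n.
    + simpl. unfold T. simpl. rewrite !binC_n_0, binC_n_n. simpl. ring.
    + assert (HS : forall k, (k <= S n)%nat -> T (S (S n)) (S k) =
          Cplus (Cmult a (T (S n) k)) (if (k <? S n)%nat then Cmult b (T (S n) (S k)) else RtoC 0)).
      { intros k Hk. unfold T. destruct (Nat.ltb_spec k (S n)).
        - rewrite <- pascal by lia. rewrite RtoC_plus.
          replace (S (S n) - S k)%nat with (S (S n - S k)) by lia.
          replace (S n - k)%nat with (S (S n - S k)) by lia. simpl. ring.
        - assert (k = S n) by lia. subst k. rewrite !binC_n_n, !Nat.sub_diag. simpl. ring. }
      rewrite (csum_ext _ _ _ HS), csum_plus, <- csum_mult_l.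
      assert (E1 : csum (fun k => if (k <? S n)%nat then Cmult b (T (S n) (S k)) else RtoC 0) (S n)
                   = Cmult b (csum (fun k => T (S n) (S k)) n)).
      { change (csum ?f (S n)) with (Cplus (csum f n) (f (S n))).
        replace ((S n) <? S n)%nat with false by (symmetry; apply Nat.ltb_irrefl).
        rewrite (csum_ext (fun k => if (k <? S n)%nat then Cmult b (T (S n) (S k)) else RtoC 0)
                        (fun k => Cmult b (T (S n) (S k))) n).
        2:{ intros k Hk. destruct (Nat.ltb_spec k (S n)); auto; lia. }
        rewrite <- csum_mult_l, Nat.ltb_irrefl. ring. }
      rewrite E1, H0, (csum_shift (T (S n)) n). ring.
Qed.

Ltac toR := match goal with |- ?a = ?b => change (@eq R a b) end.

Lemma pow_n_abs (y : R) k : @pow_n (AbsRing.Ring R_AbsRing) y k = y ^ k.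
Proof. apply pow_n_pow. Qed.

Lemma is_series_R0 (a : nat -> R) : (forall n, a n = 0) -> is_series a 0.
Proof.
  intros H. unfold is_series. eapply filterlim_ext; [|apply (filterlim_const (F:=eventually) (0:R))].
  intros n. rewrite sum_n_Reals.
  assert (E : forall n, sum_f_R0 a n = 0) by (induction n0; simpl; rewrite H; [lra | rewrite IHn0; lra]).
  symmetry. apply E.
Qed.

Lemma pseries_R a x l : is_pseries a x l -> is_series (fun n => a n * x ^ n) l.
Proof.
  unfold is_pseries. intros H. eapply is_series_ext; [|exact H]. intros n. cbv beta.
  change (scal ?u ?v) with (u * v). rewrite pow_n_pow. toR. ring.
Qed.

Definition ef (n : nat) : R := / INR (fact n).

Lemma ex_exp_abs (r : R) : ex_series (fun n => ef n * Rabs r ^ n).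
Proof. exists (exp (Rabs r)). apply pseries_R, is_exp_Reals. Qed.

Lemma PSc_exp_real x : PSc ef (RtoC x) (RtoC (exp x)).
Proof.
  split.
  - apply C_split. split.
    + rewrite re_RtoC. eapply is_series_ext; [|apply pseries_R, (is_exp_Reals x)].
      intros n. cbv beta. rewrite <- RtoC_pow, <- RtoC_mult, re_RtoC. reflexivity.
    + rewrite im_RtoC. apply is_series_R0. intros n.
      rewrite <- RtoC_pow, <- RtoC_mult, im_RtoC. reflexivity.
  - eapply ex_series_ext_R; [|apply (ex_exp_abs x)]. intros n.
    rewrite Cmod_mult, Cmod_R, Cmod_pow, Cmod_R. unfold ef.
    rewrite (Rabs_pos_eq (/ INR (fact n))). reflexivity. left; apply Rinv_0_lt_compat, INR_fact_lt_0.
Qed.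

Lemma Cpow_double z m : Cpow z (2 * m) = Cpow (Cmult z z) m.
Proof.
  induction m. reflexivity.
  replace (2 * S m)%nat with (S (S (2 * m))) by lia.
  change (Cpow z (S (S (2*m)))) with (Cmult z (Cmult z (Cpow z (2*m)))). rewrite IHm.
  change (Cpow (Cmult z z) (S m)) with (Cmult (Cmult z z) (Cpow (Cmult z z) m)). ring.
Qed.

Lemma Ci_even m : Cpow Ci (2 * m) = RtoC ((-1) ^ m).
Proof.
  rewrite Cpow_double. replace (Cmult Ci Ci) with (RtoC (-1)).
  - rewrite RtoC_pow. reflexivity.
  - unfold Ci, Cmult, RtoC; simpl; f_equal; ring.
Qed.

Lemma Ci_odd m : Cpow Ci (2 * m + 1) = Cmult (RtoC ((-1) ^ m)) Ci.
Proof.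
  replace (2 * m + 1)%nat with (S (2 * m)) by lia. change (Cpow Ci (S (2*m))) with (Cmult Ci (Cpow Ci (2*m))). rewrite Ci_even. ring.
Qed.

Lemma is_series_odd_even_R (a : nat -> R) x l1 l2 :
  is_series (fun m => a (2 * m)%nat * (x ^ 2) ^ m) l1 ->
  is_series (fun m => a (2 * m + 1)%nat * (x ^ 2) ^ m) l2 ->
  is_series (fun n => a n * x ^ n) (l1 + x * l2).
Proof.
  intros H1 H2. apply pseries_R. apply is_pseries_odd_even.
  - unfold is_pseries. eapply is_series_ext; [|exact H1]. intros n. cbv beta.
    change (scal ?u ?v) with (u * v). toR. rewrite <- (pow_n_abs (x ^ 2) n). ring.
  - unfold is_pseries. eapply is_series_ext; [|exact H2]. intros n. cbv beta.
    change (scal ?u ?v) with (u * v). toR. rewrite <- (pow_n_abs (x ^ 2) n). ring.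
Qed.

Lemma cos_series y : is_series (fun m => cos_n m * (y ^ 2) ^ m) (cos y).
Proof.
  unfold cos. destruct (exist_cos (Rsqr y)) as [c Hc]. unfold cos_in in Hc.
  apply is_series_Reals in Hc. eapply is_series_ext; [|exact Hc].
  intros n. cbv beta. unfold Rsqr. f_equal. f_equal. ring.
Qed.

Lemma sin_series y : exists l, is_series (fun m => sin_n m * (y ^ 2) ^ m) l /\ sin y = y * l.
Proof.
  unfold sin. destruct (exist_sin (Rsqr y)) as [c Hc]. unfold sin_in in Hc.
  apply is_series_Reals in Hc. exists c. split; auto. eapply is_series_ext; [|exact Hc].
  intros n. cbv beta. unfold Rsqr. f_equal. f_equal. ring.
Qed.

Lemma Cmod_Ci : Cmod Ci = 1.
Proof. unfold Cmod, Ci; simpl. replace (0 * (0 * 1) + 1 * (1 * 1)) with 1 by ring. apply sqrt_1. Qed.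

Lemma ef_pos n : 0 < ef n.
Proof. apply Rinv_0_lt_compat, INR_fact_lt_0. Qed.

Lemma PSc_exp_imag y : PSc ef (Cmult (RtoC y) Ci) (cos y, sin y).
Proof.
  assert (T : forall n, Cmult (RtoC (ef n)) (Cpow (Cmult (RtoC y) Ci) n)
                 = Cmult (RtoC (ef n * y ^ n)) (Cpow Ci n)).
  { intros n. rewrite Cpow_RtoC_mult, !RtoC_mult. (try toR); ring. }
  split.
  - apply C_split. split.
    + change (Re (cos y, sin y)) with (cos y). replace (cos y) with (cos y + y * 0) by ring.
      eapply is_series_ext; [|apply (is_series_odd_even_R (fun n => ef n * Re (Cpow Ci n)))].
      * intros n. cbv beta. rewrite T, re_scal_l. (try toR); ring.
      * eapply is_series_ext; [|apply cos_series]. intros m. cbv beta.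
        rewrite Ci_even, re_RtoC. unfold cos_n, ef. toR; field. apply INR_fact_neq_0.
      * apply is_series_R0. intros m. rewrite Ci_odd, re_scal_l. simpl. (try toR); ring.
    + change (Im (cos y, sin y)) with (sin y). destruct (sin_series y) as [l [Hl Hs]]. rewrite Hs.
      replace (y * l) with (0 + y * l) by ring.
      eapply is_series_ext; [|apply (is_series_odd_even_R (fun n => ef n * Im (Cpow Ci n)))].
      * intros n. cbv beta. rewrite T, im_scal_l. (try toR); ring.
      * apply is_series_R0. intros m. rewrite Ci_even, im_RtoC. (try toR); ring.
      * eapply is_series_ext; [|exact Hl]. intros m. cbv beta.
        rewrite Ci_odd, im_scal_l. unfold sin_n, ef. simpl Im. toR; field. apply INR_fact_neq_0.
  - eapply ex_series_ext_R; [|apply (ex_exp_abs y)]. intros n.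
    rewrite T, Cmod_mult, Cmod_R, Cmod_pow, Cmod_Ci, pow1, Rabs_mult, RPow_abs.
    rewrite (Rabs_pos_eq (ef n)) by (left; apply ef_pos). (try toR); ring.
Qed.

Lemma PSc_exp w : PSc ef w (cexp w).
Proof.
  destruct w as [x y].
  assert (Ew : (x, y) = Cplus (RtoC x) (Cmult (RtoC y) Ci)).
  { unfold Cplus, Cmult, RtoC, Ci; simpl. f_equal; ring. }
  assert (Ee : cexp (x, y) = Cmult (RtoC (exp x)) (cos y, sin y)).
  { unfold cexp, Cmult, RtoC; simpl. f_equal; ring. }
  rewrite Ee, Ew.
  destruct (PSc_exp_real x) as [H1 A1]. destruct (PSc_exp_imag y) as [H2 A2].
  assert (E : forall n, csum (fun k => Cmult (Cmult (RtoC (ef k)) (Cpow (RtoC x) k))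
        (Cmult (RtoC (ef (n - k)%nat)) (Cpow (Cmult (RtoC y) Ci) (n - k)%nat))) n
      = Cmult (RtoC (ef n)) (Cpow (Cplus (RtoC x) (Cmult (RtoC y) Ci)) n)).
  { intros n. rewrite C_binomial, csum_mult_l. apply csum_ext. intros k Hk.
    assert (Hb : ef n * Binomial.C n k = ef k * ef (n - k)).
    { unfold ef, Binomial.C. field. repeat split; apply INR_fact_neq_0. }
    transitivity (Cmult (RtoC (ef n * Binomial.C n k)) (Cmult (Cpow (RtoC x) k) (Cpow (Cmult (RtoC y) Ci) (n - k)))).
    - rewrite Hb, RtoC_mult. ring.
    - rewrite RtoC_mult. ring. }
  split.
  - eapply is_series_ext; [|apply (C_cauchy _ _ _ _ H1 H2 A1 A2)]. exact E.
  - eapply ex_series_ext_R; [|apply (C_cauchy_abs _ _ A1 A2)]. intros n. cbv beta. rewrite E. reflexivity.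
Qed.

Lemma cexp_add a b : cexp (Cplus a b) = Cmult (cexp a) (cexp b).
Proof.
  destruct a as [x1 y1], b as [x2 y2]. unfold cexp, Cplus, Cmult; simpl.
  rewrite exp_plus, cos_plus, sin_plus. f_equal; ring.
Qed.

Lemma Cmod_cexp w : Cmod (cexp w) = exp (Re w).
Proof.
  destruct w as [x y]. unfold Cmod, cexp; simpl.
  replace (exp x * cos y * (exp x * cos y * 1) + exp x * sin y * (exp x * sin y * 1))
    with (exp x * exp x * ((sin y)² + (cos y)²)) by (unfold Rsqr; ring).
  rewrite sin2_cos2, Rmult_1_r. apply sqrt_square. left; apply exp_pos.
Qed.

Lemma cexp_0 : cexp (RtoC 0) = RtoC 1.
Proof. unfold cexp, RtoC; simpl. rewrite exp_0, cos_0, sin_0. f_equal; ring. Qed.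

Definition cex (z : C) (r : R) : C := cexp (Cmult (RtoC r) z).

Lemma ex_add z r s : cex z (r + s) = Cmult (cex z r) (cex z s).
Proof. unfold cex. rewrite <- cexp_add, RtoC_plus. f_equal. ring. Qed.

Lemma ex_zero z : cex z 0 = RtoC 1.
Proof. unfold cex. rewrite Cmult_0_l. apply cexp_0. Qed.

Lemma ex_nat z r n : cex z (INR n * r) = Cpow (cex z r) n.
Proof.
  induction n. simpl. rewrite Rmult_0_l. apply ex_zero.
  rewrite S_INR. replace ((INR n + 1) * r) with (INR n * r + r) by ring.
  rewrite ex_add, IHn. simpl. ring.
Qed.

Lemma Cmod_ex z r : Cmod (cex z r) = exp (r * Re z).
Proof. unfold cex. rewrite Cmod_cexp, re_scal_l. reflexivity. Qed.

Lemma bern_upto_S m j : (j <= m)%nat -> bern_upto (S m) j = bern_upto m j.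
Proof. intros H. simpl. rewrite (proj2 (Nat.leb_le j m) H). reflexivity. Qed.

Lemma bern_stable d j : bern_upto (j + d) j = bernoulli j.
Proof.
  induction d. rewrite Nat.add_0_r. reflexivity.
  rewrite Nat.add_succ_r, bern_upto_S by lia. exact IHd.
Qed.

Lemma bern_le m j : (j <= m)%nat -> bern_upto m j = bernoulli j.
Proof. intros H. replace m with (j + (m - j))%nat by lia. apply bern_stable. Qed.

Lemma bern_rec m : bernoulli (S m) =
  - / INR (m + 2) * sum_f_R0 (fun i => Binomial.C (m + 2) i * bernoulli i) m.
Proof.
  unfold bernoulli at 1.
  change (bern_upto (S m) (S m)) with (if (S m <=? m)%nat then bern_upto m (S m) else - / INR (m + 2) * sum_f_R0 (fun i => Binomial.C (m + 2) i * bern_upto m i) m).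
  rewrite (proj2 (Nat.leb_gt (S m) m)) by lia.
  f_equal. apply sum_eq. intros i Hi. rewrite bern_le by lia. reflexivity.
Qed.

Lemma bern0 : bernoulli 0 = 1.
Proof. reflexivity. Qed.

Lemma bern1 : bernoulli 1 = - / 2.
Proof.
  rewrite bern_rec. simpl sum_f_R0. rewrite bern0, binC_n_0. simpl. field.
Qed.

Lemma fact_S n : INR (fact (S n)) = INR (S n) * INR (fact n).
Proof. rewrite fact_simpl, mult_INR. reflexivity. Qed.

Lemma binC_n_1 n : Binomial.C (S n) 1 = INR (S n).
Proof.
  unfold Binomial.C. replace (S n - 1)%nat with n by lia. rewrite fact_S. simpl (fact 1).
  change (INR 1) with 1. field. apply INR_fact_neq_0.
Qed.

Lemma binC_n_pred n : Binomial.C (S n) n = INR (S n).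
Proof.
  unfold Binomial.C. replace (S n - n)%nat with 1%nat by lia. rewrite fact_S. simpl (fact 1).
  change (INR 1) with 1. field. apply INR_fact_neq_0.
Qed.

Lemma bern_sum0 m : sum_f_R0 (fun i => Binomial.C (m + 2) i * bernoulli i) (S m) = 0.
Proof.
  simpl sum_f_R0 at 1. rewrite bern_rec.
  replace (Binomial.C (m + 2) (S m)) with (INR (m+2))
    by (replace (m+2)%nat with (S (S m)) by lia; rewrite binC_n_pred; reflexivity).
  field. replace (m + 2)%nat with (S (S m)) by lia. apply not_0_INR. lia.
Qed.

Lemma bnum_sum m : sum_f_R0 (fun i => Binomial.C (S m) i * bnum i) m = - INR (S m).
Proof.
  destruct m.
  - simpl. rewrite binC_n_0. simpl. ring.
  - set (f := fun i => Binomial.C (S (S m)) i * (bnum i + bernoulli i)).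
    assert (Hz : forall k, f (S (S k)) = 0) by (intros k; unfold f; cbn [bnum]; ring).
    assert (Hf : forall N, (1 <= N)%nat -> sum_f_R0 f N = f 1%nat).
    { intros N HN. induction N as [|N IH]. lia. destruct N.
      - change (sum_f_R0 f 1) with (f 0%nat + f 1%nat). unfold f at 1. cbn [bnum]. rewrite bern0. ring.
      - change (sum_f_R0 f (S (S N))) with (sum_f_R0 f (S N) + f (S (S N))).
        rewrite Hz, IH by lia. ring. }
    transitivity (sum_f_R0 (fun i => (Binomial.C (m + 2) i * bernoulli i) * (-1)) (S m) + sum_f_R0 f (S m)).
    + rewrite <- plus_sum. apply sum_eq. intros i Hi. unfold f.
      replace (m + 2)%nat with (S (S m)) by lia. ring.
    + rewrite <- scal_sum, bern_sum0, Hf by lia. unfold f. cbn [bnum]. rewrite bern1, binC_n_1. field.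
Qed.

Definition BB (n : nat) : R := bernoulli n / INR (fact n).

Lemma BB_rec m : BB (S m) = - sum_f_R0 (fun i => BB i * / INR (fact (m + 2 - i))) m.
Proof.
  unfold BB. rewrite bern_rec. replace (m + 2)%nat with (S (S m)) by lia.
  replace (- / INR (S (S m)) * sum_f_R0 (fun i => Binomial.C (S (S m)) i * bernoulli i) m / INR (fact (S m)))
    with ((- / INR (S (S m)) / INR (fact (S m))) * sum_f_R0 (fun i => Binomial.C (S (S m)) i * bernoulli i) m)
    by (field; repeat split; try apply INR_fact_neq_0; apply not_0_INR; lia).
  rewrite scal_sum.
  replace (- sum_f_R0 (fun i => bernoulli i / INR (fact i) * / INR (fact (S (S m) - i))) m)
    with ((-1) * sum_f_R0 (fun i => bernoulli i / INR (fact i) * / INR (fact (S (S m) - i))) m) by ring.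
  rewrite scal_sum. apply sum_eq. intros i Hi.
  unfold Binomial.C. rewrite (fact_S (S m)).
  field. repeat split; try apply INR_fact_neq_0. apply not_0_INR; lia.
Qed.

Lemma fact_ge_pow2 j : 2 ^ j <= INR (fact (S j)).
Proof.
  induction j. simpl. lra.
  rewrite fact_S, S_INR. simpl pow.
  assert (0 <= INR j) by apply pos_INR. assert (0 < 2 ^ j) by (apply pow_lt; lra).
  replace (INR (S j)) with (INR j + 1) by (rewrite S_INR; ring). nra.
Qed.

Lemma sum_pow2 n : sum_f_R0 (fun i => 2 ^ i) n = 2 ^ (S n) - 1.
Proof. induction n. simpl. ring. simpl sum_f_R0. rewrite IHn. simpl. ring. Qed.

Lemma sum_inv_fact n : sum_f_R0 (fun i => / INR (fact (n + 2 - i))) n <= 1.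
Proof.
  apply Rle_trans with (sum_f_R0 (fun i => 2 ^ i / 2 ^ (S n)) n).
  - apply sum_Rle. intros i Hi.
    replace (n + 2 - i)%nat with (S (S n - i)) by lia.
    replace (2 ^ i / 2 ^ S n) with (/ 2 ^ (S n - i)).
    + apply Rinv_le_contravar. apply pow_lt; lra. apply fact_ge_pow2.
    + replace (2 ^ S n) with (2 ^ i * 2 ^ (S n - i)).
      * field. split; apply pow_nonzero; lra.
      * rewrite <- pow_add. f_equal. lia.
  - unfold Rdiv. rewrite <- (scal_sum (fun i => 2 ^ i)), sum_pow2.
    assert (0 < 2 ^ S n) by (apply pow_lt; lra).
    rewrite Rmult_minus_distr_l, Rinv_l by lra.
    assert (0 < / 2 ^ S n) by (apply Rinv_0_lt_compat; lra). lra.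
Qed.

Lemma BB_bound n : Rabs (BB n) <= 1.
Proof.
  assert (H : forall N i, (i <= N)%nat -> Rabs (BB i) <= 1).
  { induction N; intros i Hi.
    - assert (i = 0%nat) by lia. subst. unfold BB. rewrite bern0. simpl. rewrite Rabs_pos_eq; lra.
    - destruct (Nat.le_gt_cases i N). apply IHN; auto.
      assert (i = S N) by lia. subst i. rewrite BB_rec, Rabs_Ropp.
      eapply Rle_trans. apply Rsum_abs.
      eapply Rle_trans; [|apply (sum_inv_fact N)].
      apply sum_Rle. intros i Hi'. rewrite Rabs_mult.
      rewrite (Rabs_pos_eq (/ _)) by (left; apply Rinv_0_lt_compat, INR_fact_lt_0).
      assert (0 < / INR (fact (N + 2 - i))) by (apply Rinv_0_lt_compat, INR_fact_lt_0).
      specialize (IHN i Hi'). nra. }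
  apply (H n). lia.
Qed.

Definition hcoef (s : nat) : R := bnum s / INR (fact s).

Lemma hcoef_bound s : Rabs (hcoef s) <= 2.
Proof.
  destruct s as [|[|s]]; unfold hcoef; simpl bnum.
  - simpl. rewrite Rabs_left; lra.
  - simpl. rewrite Rabs_left; lra.
  - replace (- bernoulli (S (S s)) / INR (fact (S (S s)))) with (- BB (S (S s))) by (unfold BB; field; apply INR_fact_neq_0).
    rewrite Rabs_Ropp. generalize (BB_bound (S (S s))). lra.
Qed.

Definition dcoef (n : nat) : R := (if (n =? 0)%nat then 1 else 0) - ef n.

Lemma hcoef_ef_sum m :
  sum_f_R0 (fun k => hcoef k * ef (S m - k)) m = - ef m.
Proof.
  transitivity (/ INR (fact (S m)) * sum_f_R0 (fun i => Binomial.C (S m) i * bnum i) m).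
  - rewrite scal_sum. apply sum_eq. intros i Hi. unfold hcoef, ef, Binomial.C.
    field. repeat split; apply INR_fact_neq_0.
  - rewrite bnum_sum, fact_S. unfold ef. field. split. apply INR_fact_neq_0. apply not_0_INR; lia.
Qed.

Lemma gf_coef n :
  sum_f_R0 (fun k => hcoef k * dcoef (n - k)) n = match n with O => 0 | S m => ef m end.
Proof.
  destruct n as [|m].
  - simpl. unfold dcoef, ef. simpl. field.
  - change (sum_f_R0 (fun k => hcoef k * dcoef (S m - k)) (S m))
      with (sum_f_R0 (fun k => hcoef k * dcoef (S m - k)) m + hcoef (S m) * dcoef (S m - S m)).
    rewrite Nat.sub_diag. replace (dcoef 0) with 0 by (unfold dcoef, ef; simpl; field).
    rewrite (sum_eq _ (fun k => (hcoef k * ef (S m - k)) * (-1))).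
    + rewrite <- scal_sum, hcoef_ef_sum. ring.
    + intros i Hi. unfold dcoef. replace (S m - i)%nat with (S (m - i)) by lia. simpl. ring.
Qed.

Lemma bern_gf w : Cmod w < 1 ->
  exists Hv, PSc hcoef w Hv /\ Cmult Hv (Cminus (RtoC 1) (cexp w)) = Cmult w (cexp w).
Proof.
  intros Hw. destruct (PSc_bound hcoef w 2 hcoef_bound Hw) as [Hv HH].
  exists Hv. split; auto.
  pose proof (PSc_minus _ _ _ _ _ (PSc_delta w) (PSc_exp w)) as Hd.
  pose proof (PSc_mult _ _ _ _ _ HH Hd) as Hm.
  pose proof (PSc_shift _ _ _ (PSc_exp w)) as Hs.
  eapply PSc_unique; [exact Hm|]. eapply PSc_ext; [|exact Hs].
  intros n. symmetry. rewrite <- gf_coef. apply sum_eq. intros; reflexivity.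
Qed.


Lemma exp_mono x y : x <= y -> exp x <= exp y.
Proof. intros H. destruct (Req_dec x y). subst; lra. left; apply exp_increasing; lra. Qed.

Lemma exp_nat x n : exp (INR n * x) = exp x ^ n.
Proof.
  induction n. simpl. rewrite Rmult_0_l. apply exp_0.
  rewrite S_INR. replace ((INR n + 1) * x) with (INR n * x + x) by ring.
  rewrite exp_plus, IHn. simpl. ring.
Qed.

Lemma pow_le_1 q k : 0 <= q <= 1 -> q ^ k <= 1.
Proof. intros H. rewrite <- (pow1 k). apply pow_incr. lra. Qed.

Lemma pow_decr q m n : 0 <= q <= 1 -> (m <= n)%nat -> q ^ n <= q ^ m.
Proof.
  intros Hq Hmn. replace n with (m + (n - m))%nat by lia. rewrite pow_add.
  assert (0 <= q ^ m) by (apply pow_le; lra).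
  assert (q ^ (n - m) <= 1) by (apply pow_le_1; lra). nra.
Qed.

Lemma geomC (w : C) n N : (n <= S N)%nat ->
  Cmult (Cminus (RtoC 1) w) (sum_n_m (fun i => Cpow w i) n N) = Cminus (Cpow w n) (Cpow w (S N)).
Proof.
  revert n. induction N; intros n Hn.
  - destruct n as [|[|n]]; try lia.
    + rewrite sum_n_n. simpl. ring.
    + rewrite sum_n_m_zero by lia. change (@zero C_AbelianMonoid) with (RtoC 0). ring.
  - destruct (Nat.eq_dec n (S (S N))) as [->|Hne].
    + rewrite sum_n_m_zero by lia. change (@zero C_AbelianMonoid) with (RtoC 0). ring.
    + rewrite sum_n_Sm by lia. change (plus ?x ?y) with (Cplus x y).
      rewrite Cmult_plus_distr_l, IHN by lia. simpl. ring.
Qed.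

Lemma geomR (q : R) n N : (n <= S N)%nat ->
  (1 - q) * sum_n_m (fun i => q ^ i) n N = q ^ n - q ^ (S N).
Proof.
  revert n. induction N; intros n Hn.
  - destruct n as [|[|n]]; try lia.
    + rewrite sum_n_n. simpl. ring.
    + rewrite sum_n_m_zero by lia. change (@zero R_AbelianMonoid) with 0. simpl. ring.
  - destruct (Nat.eq_dec n (S (S N))) as [->|Hne].
    + rewrite sum_n_m_zero by lia. change (@zero R_AbelianMonoid) with 0. ring.
    + rewrite sum_n_Sm by lia. change (plus ?x ?y) with (x + y).
      rewrite Rmult_plus_distr_l, IHN by lia. simpl. ring.
Qed.

Lemma geomR_bound q n N : 0 <= q < 1 -> sum_n_m (fun i => q ^ i) n N <= / (1 - q).
Proof.
  intros Hq. destruct (le_lt_dec n (S N)).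
  - pose proof (geomR q n N l) as E.
    assert (q ^ n <= 1) by (apply pow_le_1; lra).
    assert (0 <= q ^ S N) by (apply pow_le; lra).
    apply (Rmult_le_reg_l (1 - q)). lra. rewrite E, Rinv_r by lra. lra.
  - rewrite sum_n_m_zero by lia. change (@zero R_AbelianMonoid) with 0.
    left. apply Rinv_0_lt_compat. lra.
Qed.

Definition Gz (w : C) : C := Cdiv (cexp w) (Cminus (RtoC 1) (cexp w)).

Fixpoint Pz (z : C) (bs : list nat) : C :=
  match bs with
  | nil => RtoC 1
  | b :: bs' => Cmult (Gz (Cmult (RtoC (INR (list_sum (b :: bs')))) z)) (Pz z bs')
  end.

Definition LimB (z : C) (t : R) (bs : list nat) (lo : nat) : C :=
  Cmult (cex z ((INR lo + t) * INR (list_sum bs))) (Pz z bs).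

Lemma Cmod_1_minus (w : C) : Cmod w < 1 -> 1 - Cmod w <= Cmod (Cminus (RtoC 1) w).
Proof.
  intros H. assert (E : RtoC 1 = Cplus (Cminus (RtoC 1) w) w) by ring.
  pose proof (Cmod_triangle (Cminus (RtoC 1) w) w). rewrite <- E, Cmod_1 in H0. lra.
Qed.

Lemma Cmod_sum_n_m (a : nat -> C) n m :
  Cmod (sum_n_m a n m) <= sum_n_m (fun k => Cmod (a k)) n m.
Proof. exact (norm_sum_n_m (V := C_NormedModule) a n m). Qed.

Lemma Cmod_minus_sym (a b : C) : Cmod (Cminus a b) = Cmod (Cminus b a).
Proof.
  replace (Cminus a b) with (Cmult (RtoC (-1)) (Cminus b a)).
  - rewrite Cmod_mult, Cmod_R. rewrite Rabs_left by lra. ring.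
  - destruct a, b. unfold Cminus, Cmult, Cplus, Copp, RtoC; simpl. f_equal; ring.
Qed.

Lemma Cmod_minus_le (a b : C) : Cmod (Cminus a b) <= Cmod a + Cmod b.
Proof.
  unfold Cminus. eapply Rle_trans. apply Cmod_triangle. rewrite Cmod_opp. lra.
Qed.

Lemma box_bound z t : Re z < 0 -> 0 <= t -> forall bs, (forall b, In b bs -> (0 < b)%nat) ->
  exists K, 0 <= K /\ forall lo N,
    Cmod (Cminus (LimB z t bs lo) (phi_box bs t z lo N)) <= K * exp (Re z) ^ N.
Proof.
  intros Hz Ht.
  assert (Hq : 0 < exp (Re z) < 1).
  { split. apply exp_pos. rewrite <- exp_0. apply exp_increasing. lra. }
  set (q := exp (Re z)) in *.
  induction bs as [|b bs IH]; intros Hpos.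
  - exists 0. split; [lra|]. intros lo N. unfold LimB. simpl list_sum. simpl phi_box. simpl Pz.
    rewrite Rmult_0_r, ex_zero. replace (Cminus (Cmult (RtoC 1) (RtoC 1)) (RtoC 1)) with (RtoC 0) by ring.
    rewrite Cmod_0. lra.
  - destruct IH as [K' [HK' HB']]. { intros; apply Hpos; right; auto. }
    assert (Hb : 1 <= INR b). { apply (le_INR 1). apply Hpos. left; auto. }
    set (Bp := INR (list_sum bs)). assert (HBp : 0 <= Bp) by apply pos_INR.
    set (B := INR (list_sum (b :: bs))).
    assert (EB : B = INR b + Bp) by (unfold B, Bp; simpl list_sum; rewrite plus_INR; ring).
    set (w := cex z B).
    assert (Hw : Cmod w <= q).
    { unfold w. rewrite Cmod_ex. apply exp_mono. nra. }
    assert (Hw0 : 0 <= Cmod w) by apply Cmod_ge_0.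
    set (P' := Pz z bs).
    set (c := Cmult (cex z (t * B)) P').
    assert (Hc : Cmod c <= Cmod P').
    { unfold c. rewrite Cmod_mult, Cmod_ex.
      assert (exp (t * B * Re z) <= 1) by (rewrite <- exp_0; apply exp_mono; rewrite EB; assert (0 <= t * (INR b + Bp)) by (apply Rmult_le_pos; lra); nra).
      pose proof (Cmod_ge_0 P'). nra. }
    assert (H1w : 1 - q <= Cmod (Cminus (RtoC 1) w)).
    { pose proof (Cmod_1_minus w ltac:(lra)). lra. }
    assert (Hw1 : Cminus (RtoC 1) w <> RtoC 0).
    { intros E. rewrite E, Cmod_0 in H1w. lra. }
    assert (HPz : 0 <= Cmod (Pz z (b :: bs))) by apply Cmod_ge_0.
    assert (HP' : 0 <= Cmod P') by apply Cmod_ge_0.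
    assert (HqN : forall N, 0 <= q ^ N) by (intros; apply pow_le; lra).
    exists (Cmod (Pz z (b :: bs)) + (Cmod P' + K') / (1 - q)). split.
    { apply Rplus_le_le_0_compat; auto. apply Rmult_le_pos. lra. left; apply Rinv_0_lt_compat; lra. }
    intros lo N.
    assert (Eexp : forall i, Cmod (cex z ((INR i + t) * INR b)) <= q ^ i).
    { intros i. rewrite Cmod_ex. unfold q. rewrite <- exp_nat. apply exp_mono.
      assert (0 <= INR i) by apply pos_INR. assert (INR i <= (INR i + t) * INR b) by nra. nra. }
    destruct (le_lt_dec N lo) as [HNlo|HloN].
    + change (phi_box (b :: bs) t z lo N) with
        (sum_n_m (fun i => Cmult (cexp (Cmult (RtoC ((INR i + t) * INR b)) z)) (phi_box bs t z i N)) (S lo) N).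
      rewrite sum_n_m_zero by lia. change (@zero _) with (RtoC 0).
      replace (Cminus (LimB z t (b :: bs) lo) (RtoC 0)) with (LimB z t (b :: bs) lo) by ring.
      unfold LimB. fold B. rewrite Cmod_mult, Cmod_ex.
      assert (exp ((INR lo + t) * B * Re z) <= q ^ N).
      { apply Rle_trans with (q ^ lo). unfold q. rewrite <- exp_nat. apply exp_mono.
        assert (0 <= INR lo) by apply pos_INR. rewrite EB. assert (0 <= INR lo * (INR b - 1)) by (apply Rmult_le_pos; lra). assert (0 <= INR lo * Bp) by (apply Rmult_le_pos; lra). assert (0 <= t * (INR b + Bp)) by (apply Rmult_le_pos; lra). assert (INR lo <= (INR lo + t) * (INR b + Bp)) by (replace ((INR lo + t) * (INR b + Bp)) with (INR lo + INR lo * (INR b - 1) + INR lo * Bp + t * (INR b + Bp)) by ring; lra). rewrite (Rmult_comm _ (Re z)), (Rmult_comm (INR lo)). apply Rmult_le_compat_neg_l; lra. apply pow_decr; [lra | lia]. }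
      assert (0 <= (Cmod P' + K') / (1 - q) * q ^ N).
      { apply Rmult_le_pos; auto. apply Rmult_le_pos. lra. left; apply Rinv_0_lt_compat; lra. }
      assert (0 <= exp ((INR lo + t) * B * Re z)) by (left; apply exp_pos).
      nra.
    + assert (E1 : forall i, Cmult (cex z ((INR i + t) * INR b)) (LimB z t bs i) = Cmult c (Cpow w i)).
      { intros i. unfold LimB. fold Bp P'. unfold c, w.
        rewrite Cmult_assoc, <- ex_add.
        replace ((INR i + t) * INR b + (INR i + t) * Bp) with (t * B + INR i * B) by (rewrite EB; ring).
        rewrite ex_add, ex_nat. ring. }
      set (D := (sum_n_m (fun i => Cmult (cex z ((INR i + t) * INR b)) (Cminus (phi_box bs t z i N) (LimB z t bs i))) (S lo) N : C)).
      set (Sg := (sum_n_m (fun i => Cpow w i) (S lo) N : C)).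
      assert (Ephi : phi_box (b :: bs) t z lo N = Cplus (Cmult c Sg) D).
      { change (phi_box (b :: bs) t z lo N) with
          (sum_n_m (fun i => Cmult (cexp (Cmult (RtoC ((INR i + t) * INR b)) z)) (phi_box bs t z i N)) (S lo) N).
        replace (Cmult c Sg) with (sum_n_m (fun i => Cmult c (Cpow w i)) (S lo) N)
          by (exact (sum_n_m_mult_l (K:=C_Ring) c _ _ _)).
        unfold D. 
        transitivity (sum_n_m (fun i => plus (Cmult c (Cpow w i))
             (Cmult (cex z ((INR i + t) * INR b)) (Cminus (phi_box bs t z i N) (LimB z t bs i)))) (S lo) N).
        - apply sum_n_m_ext. intros i. change (plus ?x ?y) with (Cplus x y). rewrite <- E1. unfold cex. toC. ring.
        - exact (sum_n_m_plus (G:=C_AbelianMonoid) _ _ _ _). }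
      assert (Egeo := geomC w (S lo) N ltac:(lia)). fold Sg in Egeo.
      assert (ELim : LimB z t (b :: bs) lo = Cmult c (Cmult (Cpow w lo) (Cdiv w (Cminus (RtoC 1) w)))).
      { unfold LimB. fold B. change (Pz z (b :: bs)) with (Cmult (Gz (Cmult (RtoC B) z)) P').
        change (Gz (Cmult (RtoC B) z)) with (Cdiv w (Cminus (RtoC 1) w)).
        replace ((INR lo + t) * B) with (t * B + INR lo * B) by ring.
        rewrite ex_add, ex_nat. fold w. unfold c. ring. }
      assert (ESg : Sg = Cdiv (Cminus (Cpow w (S lo)) (Cpow w (S N))) (Cminus (RtoC 1) w)).
      { rewrite <- Egeo. toC. field. auto. }
      assert (Ediff : Cminus (LimB z t (b :: bs) lo) (phi_box bs t z lo N) = RtoC 0 -> True) by auto.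
      rewrite Ephi, ELim, ESg.
      replace (Cminus (Cmult c (Cmult (Cpow w lo) (Cdiv w (Cminus (RtoC 1) w))))
                (Cplus (Cmult c (Cdiv (Cminus (Cpow w (S lo)) (Cpow w (S N))) (Cminus (RtoC 1) w))) D))
        with (Cminus (Cmult c (Cdiv (Cpow w (S N)) (Cminus (RtoC 1) w))) D)
        by (change (Cpow w (S lo)) with (Cmult w (Cpow w lo)); field; auto).
      eapply Rle_trans. apply Cmod_minus_le.
      assert (B1 : Cmod (Cmult c (Cdiv (Cpow w (S N)) (Cminus (RtoC 1) w))) <= Cmod P' * q ^ N / (1 - q)).
      { rewrite Cmod_mult, Cmod_div by auto. rewrite Cmod_pow.
        assert (Cmod w ^ S N <= q ^ N).
        { simpl. assert (Cmod w ^ N <= q ^ N) by (apply pow_incr; lra).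
          assert (0 <= Cmod w ^ N) by (apply pow_le; lra). nra. }
        assert (0 <= Cmod w ^ S N) by (apply pow_le; lra).
        assert (Cmod w ^ S N / Cmod (Cminus (RtoC 1) w) <= q ^ N / (1 - q)).
        { unfold Rdiv. apply Rmult_le_compat; auto.
          left; apply Rinv_0_lt_compat; lra. apply Rinv_le_contravar; lra. }
        assert (0 <= Cmod c) by apply Cmod_ge_0.
        assert (0 <= q ^ N / (1 - q)) by (apply Rmult_le_pos; auto; left; apply Rinv_0_lt_compat; lra).
        unfold Rdiv in *. rewrite Rmult_assoc. apply Rmult_le_compat; auto.
        apply Rmult_le_pos; auto. left; apply Rinv_0_lt_compat; lra. }
      assert (B2 : Cmod D <= K' * q ^ N / (1 - q)).
      { unfold D. eapply Rle_trans. apply Cmod_sum_n_m.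
        eapply Rle_trans. apply (sum_n_m_le _ (fun i => (K' * q ^ N) * q ^ i)).
        - intros i. rewrite Cmod_mult, Cmod_minus_sym.
          specialize (HB' i N). specialize (Eexp i).
          assert (0 <= Cmod (cex z ((INR i + t) * INR b))) by apply Cmod_ge_0.
          assert (0 <= K' * q ^ N) by (apply Rmult_le_pos; auto).
          assert (0 <= Cmod (Cminus (LimB z t bs i) (phi_box bs t z i N))) by apply Cmod_ge_0.
          rewrite Rmult_comm. apply Rmult_le_compat; auto.
        - rewrite (sum_n_m_mult_l (K:=R_Ring)). change (mult ?x ?y) with (x * y).
          unfold Rdiv. apply Rmult_le_compat_l. apply Rmult_le_pos; auto.
          apply geomR_bound. lra. }
      assert (Cmod P' * q ^ N / (1 - q) + K' * q ^ N / (1 - q)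
              = (Cmod P' + K') / (1 - q) * q ^ N) by (field; lra).
      assert (0 <= Cmod (Pz z (b :: bs)) * q ^ N) by (apply Rmult_le_pos; auto).
      nra.
Qed.

Lemma sum_WC_ext k n F F' : (forall l, F l = F' l) -> sum_WC k n F = sum_WC k n F'.
Proof.
  revert n F F'. induction k; intros n F F' H; simpl.
  - rewrite H. reflexivity.
  - apply sum_eq. intros s Hs. apply IHk. intros l. apply H.
Qed.

Lemma sum_WC_scal k n c F : sum_WC k n (fun l => c * F l) = c * sum_WC k n F.
Proof.
  revert n F. induction k; intros n F; simpl.
  - destruct (n =? 0)%nat; ring.
  - rewrite scal_sum. apply sum_eq. intros s Hs. rewrite IHk. ring.
Qed.

Definition Wc (bs : list nat) (m : nat) : R :=
  sum_WC (length bs) m (fun l => tail_factor l * pow_factor l bs).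

Definition gB (B : R) (s : nat) : R := bnum s / INR (fact s) * powerRZ B (Z.of_nat s - 1).

Lemma Wc_nil m : Wc nil m = if (m =? 0)%nat then 1 else 0.
Proof. unfold Wc. simpl. destruct (m =? 0)%nat; ring. Qed.

Lemma Wc_cons b bs m :
  Wc (b :: bs) m = sum_f_R0 (fun s => gB (INR (list_sum (b :: bs))) s * Wc bs (m - s)) m.
Proof.
  unfold Wc. change (length (b :: bs)) with (S (length bs)).
  change (sum_WC (S (length bs)) m (fun l => tail_factor l * pow_factor l (b :: bs)))
    with (sum_f_R0 (fun s => sum_WC (length bs) (m - s)
             (fun l => tail_factor (s :: l) * pow_factor (s :: l) (b :: bs))) m).
  apply sum_eq. intros s Hs. rewrite <- sum_WC_scal. apply sum_WC_ext. intros l.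
  simpl tail_factor. change (pow_factor (s :: l) (b :: bs)) with
    (powerRZ (INR (list_sum (b :: bs))) (Z.of_nat s - 1) * pow_factor l bs).
  unfold gB. ring.
Qed.

Lemma powerRZ_pred B s : B <> 0 -> powerRZ B (Z.of_nat s - 1) = / B * B ^ s.
Proof.
  intros HB. destruct s.
  - simpl. field. auto.
  - replace (Z.of_nat (S s) - 1)%Z with (Z.of_nat s) by lia. rewrite <- pow_powerRZ. simpl. field. auto.
Qed.

Lemma cexp_ne1 w : Re w < 0 -> Cmod (cexp w) < 1.
Proof. intros H. rewrite Cmod_cexp, <- exp_0. apply exp_increasing. auto. Qed.

Lemma one_minus_ne0 w : Cmod w < 1 -> Cminus (RtoC 1) w <> RtoC 0.
Proof.
  intros H E. pose proof (Cmod_1_minus w H). rewrite E, Cmod_0 in H0. lra.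
Qed.

Lemma PSc_g B z : 0 < B -> B * Cmod z < 1 -> Re z < 0 ->
  PSc (gB B) z (Cmult z (Gz (Cmult (RtoC B) z))).
Proof.
  intros HB HBz Hz.
  assert (Hm : Cmod (Cmult (RtoC B) z) < 1).
  { rewrite Cmod_mult, Cmod_R, Rabs_pos_eq by lra. auto. }
  destruct (bern_gf _ Hm) as [Hv [HH E]].
  apply PSc_dilate in HH. apply (PSc_scal (/ B)) in HH.
  assert (Hre : Re (Cmult (RtoC B) z) < 0) by (rewrite re_scal_l; nra).
  pose proof (one_minus_ne0 _ (cexp_ne1 _ Hre)) as Hne.
  replace (Cmult z (Gz (Cmult (RtoC B) z))) with (Cmult (RtoC (/ B)) Hv).
  - eapply PSc_ext; [|exact HH]. intros n. unfold gB, hcoef. rewrite powerRZ_pred by lra. ring.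
  - assert (EHv : Hv = Cdiv (Cmult (Cmult (RtoC B) z) (cexp (Cmult (RtoC B) z)))
                         (Cminus (RtoC 1) (cexp (Cmult (RtoC B) z)))).
    { rewrite <- E. field. auto. }
    assert (HB0 : RtoC B <> RtoC 0) by (intros HB0; apply RtoC_inj in HB0; lra).
    rewrite EHv. unfold Gz. rewrite RtoC_inv by lra. field. auto.
Qed.

Lemma list_sum_pos bs : (forall b, In b bs -> (0 < b)%nat) -> bs <> nil -> (1 <= list_sum bs)%nat.
Proof.
  destruct bs as [|b bs]; intros H Hn. congruence. simpl. specialize (H b (or_introl eq_refl)). lia.
Qed.

Lemma PSc_W z : Re z < 0 -> forall bs, (forall b, In b bs -> (0 < b)%nat) ->
  INR (list_sum bs) * Cmod z < 1 ->
  PSc (Wc bs) z (Cmult (Cpow z (length bs)) (Pz z bs)).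
Proof.
  intros Hz bs. induction bs as [|b bs IH]; intros Hpos Hr.
  - eapply PSc_ext; [intros n; symmetry; apply Wc_nil|].
    replace (Cmult (Cpow z (length (@nil nat))) (Pz z nil)) with (RtoC 1) by (simpl; ring).
    apply PSc_delta.
  - assert (HB : 1 <= INR (list_sum (b :: bs))).
    { apply (le_INR 1). apply list_sum_pos; auto. discriminate. }
    assert (Hle : INR (list_sum bs) <= INR (list_sum (b :: bs))) by (apply le_INR; simpl; lia).
    assert (H0 : 0 <= Cmod z) by apply Cmod_ge_0.
    assert (IH' := IH (fun b0 H => Hpos b0 (or_intror H)) ltac:(nra)).
    assert (Hg := PSc_g (INR (list_sum (b :: bs))) z ltac:(lra) Hr Hz).
    pose proof (PSc_mult _ _ _ _ _ Hg IH') as Hm.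
    eapply PSc_ext; [intros n; symmetry; apply Wc_cons|].
    replace (Cmult (Cpow z (length (b :: bs))) (Pz z (b :: bs)))
      with (Cmult (Cmult z (Gz (Cmult (RtoC (INR (list_sum (b :: bs)))) z)))
                  (Cmult (Cpow z (length bs)) (Pz z bs))).
    + exact Hm.
    + change (Pz z (b :: bs)) with (Cmult (Gz (Cmult (RtoC (INR (list_sum (b :: bs)))) z)) (Pz z bs)).
      simpl length. simpl Cpow. ring.
Qed.

Definition A1c (B t : R) (s : nat) : R := first_factor s t * powerRZ B (Z.of_nat s - 1).

Lemma A1_conv B t s : B <> 0 ->
  A1c B t s = sum_f_R0 (fun i => ef i * (t * B) ^ i * gB B (s - i)) s.
Proof.
  intros HB. unfold A1c, first_factor. rewrite powerRZ_pred by auto.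
  rewrite Rmult_comm, scal_sum. apply sum_eq. intros i Hi.
  unfold gB, ef. rewrite powerRZ_pred by auto. rewrite Rpow_mult_distr.
  replace (B ^ s) with (B ^ i * B ^ (s - i)) by (rewrite <- pow_add; f_equal; lia).
  field. repeat split; auto; apply INR_fact_neq_0.
Qed.

Lemma coef_cons b bs t n :
  coef (b :: bs) t n = sum_f_R0 (fun s => A1c (INR (list_sum (b :: bs))) t s * Wc bs (n - s)) n.
Proof.
  unfold coef. change (length (b :: bs)) with (S (length bs)).
  change (sum_WC (S (length bs)) n (term (b :: bs) t))
    with (sum_f_R0 (fun s => sum_WC (length bs) (n - s) (fun l => term (b :: bs) t (s :: l))) n).
  apply sum_eq. intros s Hs. unfold Wc. rewrite <- sum_WC_scal. apply sum_WC_ext. intros l.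
  unfold term, A1c. change (pow_factor (s :: l) (b :: bs)) with
    (powerRZ (INR (list_sum (b :: bs))) (Z.of_nat s - 1) * pow_factor l bs).
  ring.
Qed.

Lemma PSc_coef z t b bs : Re z < 0 -> (forall b0, In b0 (b :: bs) -> (0 < b0)%nat) ->
  INR (list_sum (b :: bs)) * Cmod z < 1 ->
  PSc (coef (b :: bs) t) z
    (Cmult (Cpow z (length (b :: bs))) (LimB z t (b :: bs) 0)).
Proof.
  intros Hz Hpos Hr.
  set (B := INR (list_sum (b :: bs))) in *.
  assert (HB : 1 <= B) by (apply (le_INR 1); apply list_sum_pos; auto; discriminate).
  assert (He := PSc_dilate _ _ _ _ (PSc_exp (Cmult (RtoC (t * B)) z))).
  assert (Hg := PSc_g B z ltac:(lra) Hr Hz).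
  assert (HA := PSc_mult _ _ _ _ _ He Hg).
  assert (Hle : INR (list_sum bs) <= B) by (apply le_INR; simpl; lia).
  assert (H0 : 0 <= Cmod z) by apply Cmod_ge_0.
  assert (HW := PSc_W z Hz bs (fun b0 H => Hpos b0 (or_intror H)) ltac:(nra)).
  assert (HA' : PSc (A1c B t) z (Cmult (cexp (Cmult (RtoC (t * B)) z)) (Cmult z (Gz (Cmult (RtoC B) z))))).
  { eapply PSc_ext; [|exact HA]. intros n. symmetry. apply A1_conv. lra. }
  pose proof (PSc_mult _ _ _ _ _ HA' HW) as Hm.
  eapply PSc_ext; [intros n; symmetry; apply coef_cons|].
  fold B. replace (Cmult (Cpow z (length (b :: bs))) (LimB z t (b :: bs) 0)) with
    (Cmult (Cmult (cexp (Cmult (RtoC (t * B)) z)) (Cmult z (Gz (Cmult (RtoC B) z))))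
           (Cmult (Cpow z (length bs)) (Pz z bs))).
  - exact Hm.
  - unfold LimB. fold B. change (Pz z (b :: bs)) with (Cmult (Gz (Cmult (RtoC B) z)) (Pz z bs)).
    replace ((INR 0 + t) * B) with (t * B) by (simpl; ring). unfold cex.
    simpl length. simpl Cpow. ring.
Qed.

Theorem corollary3p8 (beta : list nat) (t : R) :
  (1 <= length beta)%nat ->
  (forall b, In b beta -> (0 < b)%nat) ->
  0 <= t ->
  exists r : R, 0 < r /\
    forall z : C, Re z < 0 -> Cmod z < r ->
      exists L : C,
        filterlim (phi_partial beta t z) eventually (locally L) /\
        is_series (fun n : nat =>
          Cmult (RtoC (coef beta t n)) (Cdiv (Cpow z n) (Cpow z (length beta)))) L.
Proof.
  intros Hlen Hpos Ht.
  destruct beta as [|b bs]; [simpl in Hlen; lia|].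
  set (Sm := INR (list_sum (b :: bs))).
  assert (HS : 1 <= Sm) by (apply (le_INR 1); apply list_sum_pos; auto; discriminate).
  exists (/ Sm). split. apply Rinv_0_lt_compat; lra.
  intros z Hz Hzr.
  exists (LimB z t (b :: bs) 0). split.
  - destruct (box_bound z t Hz Ht (b :: bs) Hpos) as [K [HK HB]].
    unfold phi_partial. apply (proj2 (flC _ _)). intros eps.
    assert (Hq : 0 < exp (Re z) < 1).
    { split. apply exp_pos. rewrite <- exp_0. apply exp_increasing. lra. }
    assert (Hpe : 0 < eps / (K + 1)) by (apply Rdiv_lt_0_compat; [apply cond_pos | lra]).
    destruct (pow_lt_1_zero (exp (Re z)) ltac:(rewrite Rabs_pos_eq; lra) _ Hpe) as [N0 HN0].
    exists N0. intros n Hn. apply (@norm_compat1 C_AbsRing C_NormedModule).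
    change (norm (minus (phi_box (b :: bs) t z 0 n) (LimB z t (b :: bs) 0)))
      with (Cmod (Cminus (phi_box (b :: bs) t z 0 n) (LimB z t (b :: bs) 0))).
    rewrite Cmod_minus_sym. eapply Rle_lt_trans. apply HB.
    specialize (HN0 n Hn). rewrite Rabs_pos_eq in HN0 by (apply pow_le; lra).
    assert (0 <= exp (Re z) ^ n) by (apply pow_le; lra).
    assert (K * exp (Re z) ^ n <= K * (eps / (K + 1))) by (apply Rmult_le_compat_l; lra).
    assert (K * (eps / (K + 1)) < eps).
    { unfold Rdiv. rewrite <- Rmult_assoc. apply (Rmult_lt_reg_r (K + 1)). lra.
      rewrite Rmult_assoc, Rinv_l by lra. pose proof (cond_pos eps). nra. }
    lra.
  - assert (Hz0 : z <> RtoC 0).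
    { intros E. rewrite E in Hz. simpl in Hz. lra. }
    assert (Hr : Sm * Cmod z < 1).
    { apply (Rmult_lt_compat_l Sm) in Hzr; [|lra]. rewrite Rinv_r in Hzr by lra. lra. }
    destruct (PSc_coef z t b bs Hz Hpos Hr) as [Hs _].
    set (k := length (b :: bs)) in *.
    assert (Hk : Cpow z k <> RtoC 0) by (apply Cpow_nz; auto).
    pose proof (is_series_scal (K := C_AbsRing) (Cinv (Cpow z k)) _ _ Hs) as H2.
    replace (LimB z t (b :: bs) 0) with
      (Cmult (Cinv (Cpow z k)) (Cmult (Cpow z k) (LimB z t (b :: bs) 0))).
    + eapply is_series_ext; [|exact H2]. intros n. cbv beta.
      change (scal ?x ?y) with (Cmult x y). unfold Cdiv. toC. ring.
    + toC. field. auto.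
Qed.
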